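(* Let $q>0$. For every integer $j\ge1$, $$\frac{(-1)^j}{j!}\frac{d}{dq}\tilde\gamma_j(q)=-\sum_{k=j-1}^\infty\frac{(-1)^k}{k!}\binom{k+1}{j}\tilde\gamma_k(q),$$ and $$-\tilde\psi'(q)=-\sum_{k=0}^\infty\frac{(-1)^k}{k!}\tilde\gamma_k(q).$$
   Context: For $q>0$, $\zeta_E(z,q)=\sum_{n=0}^\infty (-1)^n (n+q)^{-z}$ for $\mathrm{Re}(z)>0$, extended by analytic continuation to an entire function of $z$. The modified Stieltjes constants $\tilde\gamma_k(q)$ are defined by the Taylor expansion $\zeta_E(z,q)=\sum_{k=0}^\infty\frac{(-1)^k\tilde\gamma_k(q)}{k!}(z-1)^k$. The modified digamma function is $\tilde\psi(q):=-\tilde\gamma_0(q)=-\zeta_E(1,q)$. *)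

(* Defs.v *)
From Stdlib Require Import Reals Factorial.
From Coquelicot Require Import Coquelicot.
Open Scope R_scope.

(* The series converges (conditionally) for z > 0
   and q > 0; Coquelicot's [Series] is the limit of the partial sums. *)
Definition zetaE (z q : R) : R :=
  Series (fun n : nat => (-1) ^ n * Rpower (INR n + q) (- z)).

(* Modified Stieltjes constants: zeta_E(z,q) = sum_k (-1)^k g_k(q)/k! (z-1)^k,
   i.e. g_k(q) = (-1)^k * (d/dz)^k zeta_E(z,q) at z = 1. *)
Definition stieltjesE (k : nat) (q : R) : R :=
  (-1) ^ k * Derive_n (fun z => zetaE z q) k 1.

Definition psiE (q : R) : R := - zetaE 1 q.

(* Main.v *)
Require Import Defs.
From Stdlib Require Import Reals Factorial Lra Lia.
From Coquelicot Require Import Coquelicot.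
Open Scope R_scope.


Lemma isR_plus (a b : nat -> R) la lb :
  is_series a la -> is_series b lb -> is_series (fun n => a n + b n) (la + lb).
Proof. intros Ha Hb. exact (is_series_plus _ _ _ _ Ha Hb). Qed.

Lemma isR_scal (c : R) (a : nat -> R) l :
  is_series a l -> is_series (fun n => c * a n) (c * l).
Proof. intros Ha. exact (is_series_scal c _ _ Ha). Qed.

Lemma isR_opp (a : nat -> R) l :
  is_series a l -> is_series (fun n => - a n) (- l).
Proof. intros Ha. exact (is_series_opp _ _ Ha). Qed.

Lemma isR_minus (a b : nat -> R) la lb :
  is_series a la -> is_series b lb -> is_series (fun n => a n - b n) (la - lb).
Proof. intros Ha Hb. exact (is_series_minus _ _ _ _ Ha Hb). Qed.

Lemma isR_ext (a b : nat -> R) (la lb : R) :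
  (forall n, @eq R (a n) (b n)) -> @eq R la lb -> is_series a la -> is_series b lb.
Proof. intros H -> Ha. exact (is_series_ext _ _ _ H Ha). Qed.

Lemma sum_n_abs_le_series (a : nat -> R) N :
  (forall n, 0 <= a n) -> ex_series a -> sum_n a N <= Series a.
Proof.
  intros Hpos Hex.
  destruct Hex as [l Hl].
  rewrite (is_series_unique _ _ Hl).
  change (is_lim_seq (sum_n a) l) in Hl.
  apply (is_lim_seq_incr_n _ N) in Hl.
  apply (is_lim_seq_le (fun _ => sum_n a N) (fun n => sum_n a (n + N)) (sum_n a N) l).
  - intros n. induction n as [|n IH]. simpl. lra.
    replace (S n + N)%nat with (S (n + N)) by lia. rewrite sum_Sn.
    unfold plus; simpl. specialize (Hpos (S (n+N))). lra.
  - apply is_lim_seq_const.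
  - exact Hl.
Qed.

Lemma exR_ext (a b : nat -> R) :
  (forall n, @eq R (a n) (b n)) -> ex_series a -> ex_series b.
Proof. intros H [l Hl]. exists l. exact (is_series_ext _ _ _ H Hl). Qed.


Lemma fin_event {T} (F : (T -> Prop) -> Prop) {FF : Filter F} (f : T -> nat -> R) (g : nat -> R) (e : posreal) :
  (forall m, filterlim (fun t => f t m) F (locally (g m))) ->
  forall N, F (fun t => forall m, (m <= N)%nat -> Rabs (f t m - g m) < e).
Proof.
  intros Hlim N. induction N as [|N IH].
  - specialize (Hlim 0%nat). apply filterlim_locally with (eps := e) in Hlim.
    revert Hlim. apply filter_imp. intros t Ht m Hm.
    assert (m = 0%nat) by lia. subst. exact Ht.
  - specialize (Hlim (S N)). apply filterlim_locally with (eps := e) in Hlim.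
    generalize (filter_and _ _ IH Hlim). apply filter_imp. intros t [H1 H2] m Hm.
    destruct (Nat.eq_dec m (S N)) as [->|Hne]. exact H2. apply H1. lia.
Qed.

Lemma sum_f_bound (u : nat -> R) (e : R) N :
  (forall m, (m <= N)%nat -> Rabs (u m) < e) -> Rabs (sum_f_R0 u N) <= (INR N + 1) * e.
Proof.
  induction N as [|N IH]; intros H.
  - simpl. specialize (H 0%nat (le_n _)). lra.
  - simpl sum_f_R0. rewrite S_INR.
    assert (Rabs (sum_f_R0 u N) <= (INR N + 1) * e) by (apply IH; intros; apply H; lia).
    specialize (H (S N) (le_n _)).
    pose proof (Rabs_triang (sum_f_R0 u N) (u (S N))). lra.
Qed.

Lemma tail_small (b : nat -> R) (e : posreal) :
  ex_series b -> exists N, Rabs (Series (fun k => b (S N + k)%nat)) < e.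
Proof.
  intros Hb. destruct Hb as [l Hl].
  pose proof Hl as Hl'.
  change (is_lim_seq (sum_n b) l) in Hl.
  apply is_lim_seq_spec in Hl. destruct (Hl e) as [N HN].
  exists N. specialize (HN N (le_n _)).
  assert (Hex : ex_series b) by (exists l; exact Hl').
  pose proof (Series_incr_n b (S N) (Nat.lt_0_succ _) Hex) as E.
  simpl pred in E. rewrite (is_series_unique _ _ Hl') in E.
  rewrite sum_n_Reals in HN.
  replace (Series (fun k => b (S N + k)%nat)) with (l - sum_f_R0 b N) by lra.
  rewrite Rabs_minus_sym. exact HN.
Qed.

Lemma ex_series_bound (u b : nat -> R) :
  ex_series b -> (forall m, Rabs (u m) <= b m) -> ex_series u.
Proof.
  intros Hb Hu. apply (@ex_series_le R_AbsRing R_CompleteNormedModule _ b); [| exact Hb].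
  intros k. exact (Hu k).
Qed.

Lemma series_tail_le (u b : nat -> R) N :
  ex_series b -> (forall m, Rabs (u m) <= b m) ->
  Rabs (Series (fun k => u (S N + k)%nat)) <= Series (fun k => b (S N + k)%nat).
Proof.
  intros Hb Hu.
  assert (Hb' : ex_series (fun k => b (S N + k)%nat)) by (apply ex_series_incr_n; exact Hb).
  assert (Ha : ex_series (fun k => Rabs (u (S N + k)%nat))).
  { apply (ex_series_bound _ (fun k => b (S N + k)%nat)); [exact Hb'|].
    intros k. rewrite Rabs_Rabsolu. apply Hu. }
  eapply Rle_trans. apply Series_Rabs. exact Ha.
  apply Series_le; [| exact Hb']. intros k. split. apply Rabs_pos. apply Hu.
Qed.

Lemma ball_R (x y : R) (e : R) : Rabs (y - x) < e -> ball x e y.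
Proof. intros H. exact H. Qed.


Lemma series_dct {T} (F : (T -> Prop) -> Prop) {FF : Filter F} (f : T -> nat -> R) (g b : nat -> R) :
  ex_series b -> F (fun t => forall m, Rabs (f t m) <= b m) ->
  (forall m, filterlim (fun t => f t m) F (locally (g m))) ->
  (forall m, Rabs (g m) <= b m) ->
  filterlim (fun t => Series (f t)) F (locally (Series g)).
Proof.
  intros Hb Hfb Hlim Hgb.
  apply filterlim_locally. intros eps.
  assert (He4 : 0 < eps / 4) by (destruct eps; simpl; lra).
  destruct (tail_small b (mkposreal _ He4) Hb) as [N HN]. simpl in HN.
  assert (He2 : 0 < eps / (4 * (INR N + 1))).
  { apply Rdiv_lt_0_compat. destruct eps; simpl; lra. pose proof (pos_INR N); lra. }
  pose proof (fin_event F f g (mkposreal _ He2) Hlim N) as Hfin. simpl in Hfin.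
  generalize (filter_and _ _ Hfin Hfb). apply filter_imp. intros t [H1 H2].
  apply ball_R.
  assert (Hexf : ex_series (f t)) by (apply (ex_series_bound _ b); auto).
  assert (Hexg : ex_series g) by (apply (ex_series_bound _ b); auto).
  rewrite (Series_incr_n (f t) (S N) (Nat.lt_0_succ _) Hexf).
  rewrite (Series_incr_n g (S N) (Nat.lt_0_succ _) Hexg). simpl pred.
  pose proof (series_tail_le (f t) b N Hb H2) as T1.
  pose proof (series_tail_le g b N Hb Hgb) as T2.
  assert (Tb : 0 <= Series (fun k => b (S N + k)%nat)).
  { apply Rle_trans with (Rabs (Series (fun k => g (S N + k)%nat))). apply Rabs_pos. exact T2. }
  rewrite Rabs_pos_eq in HN by exact Tb.
  assert (Hs : Rabs (sum_f_R0 (fun m => f t m - g m) N) <= (INR N + 1) * (eps / (4 * (INR N + 1)))).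
  { apply sum_f_bound. exact H1. }
  replace ((INR N + 1) * (eps / (4 * (INR N + 1)))) with (eps / 4) in Hs
    by (field; pose proof (pos_INR N); lra).
  assert (Ed : sum_f_R0 (fun m => f t m - g m) N = sum_f_R0 (f t) N - sum_f_R0 g N).
  { clear. induction N; simpl. ring. rewrite IHN. ring. }
  rewrite Ed in Hs.
  set (A := sum_f_R0 (f t) N) in *. set (B := sum_f_R0 g N) in *.
  set (TA := Series (fun k => f t (S N + k)%nat)) in *.
  set (TB := Series (fun k => g (S N + k)%nat)) in *.
  replace (A + TA - (B + TB)) with ((A - B) + (TA - TB)) by ring.
  eapply Rle_lt_trans. apply Rabs_triang.
  eapply Rle_lt_trans with (eps/4 + (Rabs TA + Rabs TB)).
  apply Rplus_le_compat. exact Hs.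
  unfold Rminus. eapply Rle_trans. apply Rabs_triang. rewrite Rabs_Ropp. lra.
  destruct eps; simpl in *. lra.
Qed.


Lemma sum_n_R_S (u : nat -> R) K : sum_n u (S K) = sum_n u K + u (S K).
Proof. rewrite sum_Sn. reflexivity. Qed.

Lemma sum_n_abs (u : nat -> R) K : Rabs (sum_n u K) <= sum_n (fun k => Rabs (u k)) K.
Proof.
  induction K as [|K IH]. rewrite !sum_O. lra.
  rewrite !sum_n_R_S. eapply Rle_trans. apply Rabs_triang. lra.
Qed.

Lemma term_le_series (u : nat -> R) k :
  (forall n, 0 <= u n) -> ex_series u -> u k <= Series u.
Proof.
  intros Hp Hex. eapply Rle_trans; [| apply (sum_n_abs_le_series u k Hp Hex)].
  destruct k. rewrite sum_O. lra. rewrite sum_n_R_S.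
  assert (0 <= sum_n u k).
  { clear Hex. induction k. rewrite sum_O. apply Hp. rewrite sum_n_R_S. specialize (Hp (S k)). lra. }
  lra.
Qed.

Lemma series_interchange (a : nat -> nat -> R) (b : nat -> R) :
  ex_series b -> (forall m, ex_series (fun k => Rabs (a m k))) ->
  (forall m, Series (fun k => Rabs (a m k)) <= b m) ->
  ex_series (fun m => Series (fun k => a m k)) /\
  is_series (fun k => Series (fun m => a m k)) (Series (fun m => Series (fun k => a m k))).
Proof.
  intros Hb Habs Hle.
  assert (Hsum : forall m K, Rabs (sum_n (a m) K) <= b m).
  { intros m K. eapply Rle_trans. apply sum_n_abs. eapply Rle_trans; [| apply Hle].
    apply sum_n_abs_le_series. intros; apply Rabs_pos. apply Habs. }
  assert (Hterm : forall m k, Rabs (a m k) <= b m).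
  { intros m k. eapply Rle_trans; [| apply Hle].
    apply (term_le_series (fun k => Rabs (a m k))). intros; apply Rabs_pos. apply Habs. }
  assert (Hg : forall m, Rabs (Series (a m)) <= b m).
  { intros m. eapply Rle_trans. apply Series_Rabs. apply Habs. apply Hle. }
  split.
  { apply (ex_series_bound _ b Hb). exact Hg. }
  assert (Key : forall K, sum_n (fun k => Series (fun m => a m k)) K = Series (fun m => sum_n (a m) K)).
  { induction K as [|K IH].
    - rewrite sum_O. apply Series_ext. intros m. rewrite sum_O. reflexivity.
    - rewrite sum_n_R_S, IH. rewrite <- Series_plus.
      apply Series_ext. intros m. rewrite sum_n_R_S. reflexivity.
      apply (ex_series_bound _ b Hb). intros m; apply Hsum.
      apply (ex_series_bound _ b Hb). intros m; apply Hterm. }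
  unfold is_series.
  apply (filterlim_ext (fun K => Series (fun m => sum_n (a m) K))).
  { intros K. rewrite Key. reflexivity. }
  apply (series_dct eventually (fun K m => sum_n (a m) K) (fun m => Series (a m)) b Hb).
  - exists 0%nat. intros K _ m. apply Hsum.
  - intros m. apply Series_correct. apply ex_series_Rabs. apply Habs.
  - exact Hg.
Qed.


Lemma mvt_bound (g g' : R -> R) (a h M : R) :
  (forall t, Rabs (t - a) <= Rabs h -> is_derive g t (g' t)) ->
  (forall t, Rabs (t - a) <= Rabs h -> Rabs (g' t) <= M) ->
  Rabs (g (a + h) - g a) <= M * Rabs h.
Proof.
  intros Hd Hb.
  assert (Hin : forall t, Rmin a (a + h) <= t <= Rmax a (a + h) -> Rabs (t - a) <= Rabs h).
  { intros t [H1 H2]. unfold Rmin, Rmax in *. destruct (Rle_dec a (a + h)).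
    all: unfold Rabs; repeat destruct Rcase_abs; lra. }
  destruct (MVT_gen g a (a + h) g') as [c [Hc E]].
  - intros x Hx. apply Hd. apply Hin. lra.
  - intros x Hx. apply continuity_pt_filterlim. apply (ex_derive_continuous (K:=R_AbsRing) (V:=R_NormedModule)).
    eexists. apply Hd. apply Hin. exact Hx.
  - rewrite E. replace (a + h - a) with h by ring. rewrite Rabs_mult.
    apply Rmult_le_compat_r. apply Rabs_pos. apply Hb. apply Hin. exact Hc.
Qed.

Lemma ball0 (h e : R) : ball 0 e h -> Rabs h < e.
Proof. intros H. unfold ball in H; simpl in H; unfold AbsRing_ball, abs, minus, plus, opp in H; simpl in H.
  replace (h + - 0) with h in H by ring. exact H. Qed.

Lemma ball_inv (x y e : R) : ball x e y -> Rabs (y - x) < e.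
Proof. intros H. exact H. Qed.

Lemma is_derive_series (f f' : nat -> R -> R) (B : nat -> R) (x0 d : R) :
  0 < d -> ex_series B ->
  (forall m t, Rabs (t - x0) < d -> is_derive (f m) t (f' m t)) ->
  (forall m t, Rabs (t - x0) < d -> Rabs (f' m t) <= B m) ->
  (forall t, Rabs (t - x0) < d -> ex_series (fun m => f m t)) ->
  is_derive (fun t => Series (fun m => f m t)) x0 (Series (fun m => f' m x0)).
Proof.
  intros Hd HB Hder Hbd Hex.
  apply is_derive_Reals. intros eps Heps.
  assert (L : filterlim (fun h => Series (fun m => (f m (x0 + h) - f m x0) / h)) (locally' 0)
                 (locally (Series (fun m => f' m x0)))).
  { apply (series_dct (locally' 0) (fun h m => (f m (x0 + h) - f m x0) / h)
                 (fun m => f' m x0) B HB).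
  - exists (mkposreal d Hd). intros h Hh Hne m. simpl in Hh.
    apply ball0 in Hh.
    assert (Hh0 : Rabs h <> 0) by (apply Rabs_no_R0; exact Hne).
    unfold Rdiv. rewrite Rabs_mult, Rabs_inv.
    apply Rmult_le_reg_r with (Rabs h). pose proof (Rabs_pos h); lra.
    rewrite Rmult_assoc, Rinv_l by exact Hh0. rewrite Rmult_1_r.
    apply (mvt_bound (f m) (f' m)).
    + intros t Ht. apply Hder. lra.
    + intros t Ht. apply Hbd. lra.
  - intros m. apply filterlim_locally. intros e.
    pose proof (proj1 (is_derive_Reals _ _ _) (Hder m x0 ltac:(rewrite Rminus_diag, Rabs_R0; exact Hd)) e (cond_pos e)) as [dl Hdl].
    exists dl. intros h Hh Hne. apply ball0 in Hh.
    apply ball_R. apply Hdl; assumption.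
  - intros m. apply Hbd. rewrite Rminus_diag, Rabs_R0. exact Hd.
  }
  pose proof (proj1 (filterlim_locally (F := locally' 0) _ _) L (mkposreal eps Heps)) as [dl Hdl].
  exists (mkposreal (Rmin dl d) (Rmin_pos _ _ (cond_pos dl) Hd)).
  intros h Hne Hh. simpl in Hh.
  assert (Hh1 : Rabs h < dl) by (pose proof (Rmin_l dl d); lra).
  assert (Hh2 : Rabs h < d) by (pose proof (Rmin_r dl d); lra).
  assert (B1 : ball 0 dl h).
  { apply ball_R. replace (h - 0) with h by ring. exact Hh1. }
  specialize (Hdl h B1 Hne).
  apply ball_inv in Hdl.
  replace ((Series (fun m => f m (x0 + h)) - Series (fun m => f m x0)) / h)
    with (Series (fun m => (f m (x0 + h) - f m x0) / h)).
  exact Hdl.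
  unfold Rdiv. rewrite Series_scal_r. rewrite Series_minus. reflexivity.
  apply Hex. replace (x0 + h - x0) with h by ring. exact Hh2.
  apply Hex. rewrite Rminus_diag, Rabs_R0. exact Hd.
Qed.


Definition ee (u : R) (k i : nat) : R :=
  if Nat.leb i k then u ^ (k - i) / INR (fact (k - i)) else 0.
Definition Psi (k i p : nat) (y : R) : R := ee (- ln y) k i * (/ y) ^ p.

Lemma ee_derive k i y : 0 < y ->
  is_derive (fun y => ee (- ln y) k i) y (- ee (- ln y) k (S i) / y).
Proof.
  intros Hy. unfold ee.
  destruct (Nat.leb i k) eqn:E1.
  - apply Nat.leb_le in E1.
    destruct (k - i)%nat eqn:E2.
    + assert (E3 : Nat.leb (S i) k = false) by (apply Nat.leb_gt; lia). rewrite E3.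
      assert (Z : - 0 / y = 0) by (field; lra). rewrite Z.
      apply (is_derive_ext (fun _ => 1)).
      * intros t. simpl. field.
      * apply (is_derive_const (K := R_AbsRing) 1).
    + assert (E3 : Nat.leb (S i) k = true) by (apply Nat.leb_le; lia). rewrite E3.
      replace (k - S i)%nat with n by lia.
      auto_derive.
      * exact Hy.
      * replace (match n with 0%nat => 1 | S _ => INR n + 1 end) with (INR n + 1) by (destruct n; simpl; ring).
        replace (INR (fact n + n * fact n)) with ((INR n + 1) * INR (fact n)) by (rewrite plus_INR, mult_INR; ring).
        field; repeat split; first [apply INR_fact_neq_0 | (pose proof (pos_INR n); lra) | lra].
  - assert (E3 : Nat.leb (S i) k = false) by (apply Nat.leb_gt; apply Nat.leb_gt in E1; lia). rewrite E3.
    assert (Z : - 0 / y = 0) by (field; lra). rewrite Z. apply (is_derive_const (K := R_AbsRing) 0).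
Qed.

Lemma is_derive_eq (f : R -> R) (x l l' : R) : is_derive f x l -> @eq R l l' -> is_derive f x l'.
Proof. intros H <-. exact H. Qed.

Lemma invpow_derive p y : 0 < y -> is_derive (fun y => (/ y) ^ p) y (- INR p * (/ y) ^ (S p)).
Proof.
  intros Hy. auto_derive. lra.
  destruct p. simpl. ring. rewrite S_INR. simpl. field. lra.
Qed.

Lemma Psi_derive k i p y : 0 < y ->
  is_derive (Psi k i p) y (- INR p * Psi k i (S p) y - Psi k (S i) (S p) y).
Proof.
  intros Hy. unfold Psi.
  pose proof (is_derive_mult _ _ _ _ _ (ee_derive k i y Hy) (invpow_derive p y Hy) Rmult_comm) as H.
  eapply is_derive_eq. exact H.
  unfold plus, mult; simpl. change (Rmult) with Rmult. simpl pow. field. lra.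
Qed.

Lemma dplus (f g : R -> R) x a b : is_derive f x a -> is_derive g x b -> is_derive (fun t => f t + g t) x (a + b).
Proof. intros H1 H2. exact (is_derive_plus _ _ _ _ _ H1 H2). Qed.
Lemma dminus (f g : R -> R) x a b : is_derive f x a -> is_derive g x b -> is_derive (fun t => f t - g t) x (a - b).
Proof. intros H1 H2. exact (is_derive_minus _ _ _ _ _ H1 H2). Qed.
Lemma dscal (f : R -> R) c x a : is_derive f x a -> is_derive (fun t => c * f t) x (c * a).
Proof. intros H1. exact (is_derive_scal _ _ _ _ H1). Qed.
Lemma dopp (f : R -> R) x a : is_derive f x a -> is_derive (fun t => - f t) x (- a).
Proof. intros H1. exact (is_derive_opp _ _ _ H1). Qed.

Definition phi0 k y := Psi k 0 1 y.
Definition phi1 k y := - Psi k 0 2 y - Psi k 1 2 y.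
Definition phi2 k y := 2 * Psi k 0 3 y + 3 * Psi k 1 3 y + Psi k 2 3 y.
Definition phi3 k y := -(6 * Psi k 0 4 y + 11 * Psi k 1 4 y + 6 * Psi k 2 4 y + Psi k 3 4 y).
Definition phi4 k y := 24 * Psi k 0 5 y + 50 * Psi k 1 5 y + 35 * Psi k 2 5 y + 10 * Psi k 3 5 y + Psi k 4 5 y.

Lemma INR1 : INR 1 = 1. Proof. reflexivity. Qed.
Lemma INR2 : INR 2 = 2. Proof. simpl. ring. Qed.
Lemma INR3 : INR 3 = 3. Proof. simpl. ring. Qed.
Lemma INR4 : INR 4 = 4. Proof. simpl. ring. Qed.
Ltac inrs := rewrite ?INR1, ?INR2, ?INR3, ?INR4.
Ltac psid := apply Psi_derive; assumption.

Lemma phi0_d k y : 0 < y -> is_derive (phi0 k) y (phi1 k y).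
Proof. intros Hy. unfold phi0, phi1. eapply is_derive_eq. psid. inrs. ring. Qed.

Lemma phi1_d k y : 0 < y -> is_derive (phi1 k) y (phi2 k y).
Proof. intros Hy. unfold phi1, phi2. eapply is_derive_eq.
  apply dminus; [apply dopp|]; psid. inrs. ring. Qed.

Lemma phi2_d k y : 0 < y -> is_derive (phi2 k) y (phi3 k y).
Proof. intros Hy. unfold phi2, phi3. eapply is_derive_eq.
  apply dplus; [apply dplus; [apply dscal; psid | apply dscal; psid] | psid]. inrs. ring. Qed.

Lemma phi3_d k y : 0 < y -> is_derive (phi3 k) y (phi4 k y).
Proof. intros Hy. unfold phi3, phi4. eapply is_derive_eq.
  apply dopp. apply dplus; [apply dplus; [apply dplus; [apply dscal; psid | apply dscal; psid] | apply dscal; psid] | psid]. inrs. ring. Qed.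


Lemma lim_inv_INR2 : is_lim_seq (fun n => / (INR n + 2)) 0.
Proof.
  assert (H : is_lim_seq (fun n => INR n + 2) p_infty).
  { apply is_lim_seq_plus with p_infty 2. apply is_lim_seq_INR. apply is_lim_seq_const. simpl. reflexivity. }
  pose proof (is_lim_seq_inv _ _ H) as H2. simpl in H2. apply H2. discriminate.
Qed.

Lemma ex_inv_sq : ex_series (fun n => (/ (INR n + 1)) ^ 2).
Proof.
  assert (T : is_series (fun n => / (INR n + 1) - / (INR n + 2)) 1).
  { unfold is_series. change (is_lim_seq (sum_n (fun n => / (INR n + 1) - / (INR n + 2))) 1).
    apply (is_lim_seq_ext (fun N => 1 - / (INR N + 2))).
    - intros N. induction N as [|N IH].
      + rewrite sum_O. simpl. field.
      + rewrite sum_Sn. rewrite <- IH. rewrite !S_INR. unfold plus; simpl. field.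
        pose proof (pos_INR N). split; lra.
    - replace (Finite 1) with (Rbar_minus 1 0) by (simpl; f_equal; ring).
      apply is_lim_seq_minus'. apply is_lim_seq_const. apply lim_inv_INR2. }
  apply (ex_series_bound _ (fun n => 2 * (/ (INR n + 1) - / (INR n + 2)))).
  - exists (2 * 1). exact (isR_scal 2 _ _ T).
  - intros n. pose proof (pos_INR n).
    rewrite Rabs_pos_eq. apply Rmult_le_reg_r with ((INR n + 1)^2 * (INR n + 2)).
    apply Rmult_lt_0_compat. apply pow_lt. lra. lra.
    field_simplify; try lra. nra.
Qed.

Lemma ex_inv_pow (a : R) (p : nat) : 0 < a -> (2 <= p)%nat -> ex_series (fun n => (/ (INR n + a)) ^ p).
Proof.
  intros Ha Hp.
  set (al := Rmin a 1).
  assert (Hal : 0 < al) by (apply Rmin_pos; lra).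
  assert (Hal1 : al <= a) by apply Rmin_l.
  assert (Hal2 : al <= 1) by apply Rmin_r.
  apply (ex_series_bound _ (fun n => ((/ al) ^ 2 * (/ a) ^ (p - 2)) * (/ (INR n + 1)) ^ 2)).
  - destruct ex_inv_sq as [l Hl]. exists (((/ al) ^ 2 * (/ a) ^ (p - 2)) * l). apply isR_scal. exact Hl.
  - intros n. pose proof (pos_INR n) as Hn.
    assert (P1 : 0 < / (INR n + a)) by (apply Rinv_0_lt_compat; lra).
    rewrite Rabs_pos_eq by (apply pow_le; lra).
    replace p with (2 + (p - 2))%nat at 1 by lia. rewrite pow_add.
    assert (B1 : / (INR n + a) <= / al * / (INR n + 1)).
    { rewrite <- Rinv_mult. apply Rinv_le_contravar. apply Rmult_lt_0_compat; lra. nra. }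
    assert (B2 : / (INR n + a) <= / a).
    { apply Rinv_le_contravar; lra. }
    assert (C1 : (/ (INR n + a)) ^ 2 <= (/ al) ^ 2 * (/ (INR n + 1)) ^ 2).
    { rewrite <- Rpow_mult_distr. apply pow_incr. split; lra. }
    assert (C2 : (/ (INR n + a)) ^ (p - 2) <= (/ a) ^ (p - 2)).
    { apply pow_incr. split; lra. }
    assert (0 <= (/ (INR n + a)) ^ (p - 2)) by (apply pow_le; lra).
    assert (0 <= (/ al) ^ 2 * (/ (INR n + 1)) ^ 2).
    { apply Rmult_le_pos; apply pow_le; apply Rlt_le, Rinv_0_lt_compat; lra. }
    replace ((/ al) ^ 2 * (/ a) ^ (p - 2) * (/ (INR n + 1)) ^ 2)
      with (((/ al) ^ 2 * (/ (INR n + 1)) ^ 2) * (/ a) ^ (p - 2)) by ring.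
    apply Rmult_le_compat; try assumption. apply pow_le; lra.
Qed.

Definition D1 (h : R -> R) (y : R) : R := h y - h (y + 1).
Definition D2 (h : R -> R) : R -> R := D1 (D1 h).
Definition D3 (h : R -> R) : R -> R := D1 (D2 h).

Lemma D2_exp h y : D2 h y = h y - 2 * h (y + 1) + h (y + 2).
Proof. unfold D2, D1. replace (y + 1 + 1) with (y + 2) by ring. ring. Qed.

Lemma D3_exp h y : D3 h y = h y - 3 * h (y + 1) + 3 * h (y + 2) - h (y + 3).
Proof. unfold D3, D2, D1. replace (y + 1 + 1) with (y + 2) by ring.
  replace (y + 2 + 1) with (y + 3) by ring. ring. Qed.

Lemma D1_d (h h' : R -> R) : (forall t, 0 < t -> is_derive h t (h' t)) ->
  forall y, 0 < y -> is_derive (D1 h) y (D1 h' y).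
Proof.
  intros H y Hy. unfold D1. apply dminus. apply H; lra.
  eapply is_derive_eq.
  apply (is_derive_comp h (fun t => t + 1) y (h' (y + 1)) 1). apply H; lra.
  eapply is_derive_eq. apply dplus. apply (is_derive_id (K := R_AbsRing)). apply (is_derive_const (K := R_AbsRing)).
  unfold one, zero; simpl. ring.
  unfold scal; simpl. unfold mult; simpl. ring.
Qed.

Lemma D2_d (h h' : R -> R) : (forall t, 0 < t -> is_derive h t (h' t)) ->
  forall y, 0 < y -> is_derive (D2 h) y (D2 h' y).
Proof. intros H. apply D1_d. apply D1_d. exact H. Qed.

Lemma D3_d (h h' : R -> R) : (forall t, 0 < t -> is_derive h t (h' t)) ->
  forall y, 0 < y -> is_derive (D3 h) y (D3 h' y).
Proof. intros H. apply D1_d. apply D2_d. exact H. Qed.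

Lemma D1_bound (g g' : R -> R) (y M : R) :
  (forall t, y <= t <= y + 1 -> is_derive g t (g' t)) ->
  (forall t, y <= t <= y + 1 -> Rabs (g' t) <= M) -> Rabs (D1 g y) <= M.
Proof.
  intros Hd Hb.
  destruct (MVT_gen g y (y + 1) g') as [c [Hc E]].
  - intros x Hx. apply Hd. unfold Rmin, Rmax in Hx. destruct Rle_dec; lra.
  - intros x Hx. apply continuity_pt_filterlim. apply (ex_derive_continuous (K:=R_AbsRing) (V:=R_NormedModule)).
    eexists. apply Hd. unfold Rmin, Rmax in Hx. destruct Rle_dec; lra.
  - unfold D1. rewrite Rabs_minus_sym, E. replace (y + 1 - y) with 1 by ring. rewrite Rmult_1_r.
    apply Hb. unfold Rmin, Rmax in Hc. destruct Rle_dec; lra.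
Qed.

Lemma D3_bound (h0 h1 h2 h3 : R -> R) (y M : R) :
  (forall t, 0 < t -> is_derive h0 t (h1 t)) ->
  (forall t, 0 < t -> is_derive h1 t (h2 t)) ->
  (forall t, 0 < t -> is_derive h2 t (h3 t)) -> 0 < y ->
  (forall t, y <= t <= y + 3 -> Rabs (h3 t) <= M) -> Rabs (D3 h0 y) <= M.
Proof.
  intros H0 H1 H2 Hy Hb.
  apply (D1_bound _ (D2 h1)). intros t Ht. apply D2_d. exact H0. lra.
  intros t Ht. apply (D1_bound _ (D1 h2)). intros s Hs. apply D1_d. exact H1. lra.
  intros s Hs. apply (D1_bound _ h3). intros r Hr. apply H2. lra.
  intros r Hr. apply Hb. lra.
Qed.

Lemma EXPS u : is_series (fun n => u ^ n / INR (fact n)) (exp u).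
Proof.
  pose proof (is_exp_Reals u) as H. unfold is_pseries in H.
  eapply is_series_ext; [| exact H]. intros n. simpl.
  rewrite pow_n_pow. unfold scal; simpl; unfold mult; simpl. unfold Rdiv. ring.
Qed.

Lemma ee_abs u k i : Rabs (ee u k i) = ee (Rabs u) k i.
Proof.
  unfold ee. destruct (Nat.leb i k). unfold Rdiv. rewrite Rabs_mult, <- RPow_abs.
  rewrite (Rabs_pos_eq (/ INR _)). reflexivity. apply Rlt_le, Rinv_0_lt_compat. apply INR_fact_lt_0.
  apply Rabs_R0.
Qed.

Lemma ee_nonneg u k i : 0 <= u -> 0 <= ee u k i.
Proof.
  intros Hu. unfold ee. destruct (Nat.leb i k). 2: lra.
  apply Rmult_le_pos. apply pow_le; lra. apply Rlt_le, Rinv_0_lt_compat, INR_fact_lt_0.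
Qed.

Lemma ee_mono u v k i : 0 <= u <= v -> ee u k i <= ee v k i.
Proof.
  intros Hu. unfold ee. destruct (Nat.leb i k). 2: lra.
  apply Rmult_le_compat_r. apply Rlt_le, Rinv_0_lt_compat, INR_fact_lt_0.
  apply pow_incr. exact Hu.
Qed.

Lemma ee_le_exp u k i : 0 <= u -> ee u k i <= exp u.
Proof.
  intros Hu. unfold ee. destruct (Nat.leb i k).
  - pose proof (EXPS u) as H.
    rewrite <- (is_series_unique _ _ H).
    apply (term_le_series (fun n => u ^ n / INR (fact n))).
    intros n. apply Rmult_le_pos. apply pow_le; lra. apply Rlt_le, Rinv_0_lt_compat, INR_fact_lt_0.
    exists (exp u). exact H.
  - apply Rlt_le, exp_pos.
Qed.

Lemma EES L i : is_series (fun k => 2 ^ k * ee L k i) (2 ^ i * exp (2 * L)).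
Proof.
  induction i as [|i IH].
  - apply (isR_ext (fun n => (2 * L) ^ n / INR (fact n)) _ (exp (2 * L))); [| ring | apply EXPS].
    intros n. unfold ee. simpl Nat.leb. cbv iota. rewrite Nat.sub_0_r.
    rewrite Rpow_mult_distr. unfold Rdiv. ring.
  - apply is_series_decr_1.
    apply (isR_ext (fun n => 2 * (2 ^ n * ee L n i)) _ (2 * (2 ^ i * exp (2 * L)))); [| | apply isR_scal, IH].
    + intros n. unfold ee. simpl Nat.leb. replace (S n - S i)%nat with (n - i)%nat by lia. simpl pow. ring.
    + unfold ee. simpl Nat.leb. cbv iota. unfold plus, opp; simpl. ring.
Qed.

Lemma ln_bound x y t : 0 < x <= y -> y <= t <= y + 3 -> Rabs (ln t) <= ln (y + 3) + Rabs (ln x).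
Proof.
  intros Hx Ht.
  assert (L3 : 0 <= ln (y + 3)) by (rewrite <- ln_1; apply ln_le; lra).
  pose proof (Rabs_pos (ln x)).
  destruct (Rle_lt_dec 0 (ln t)).
  - rewrite Rabs_pos_eq by lra. assert (ln t <= ln (y + 3)) by (apply ln_le; lra). lra.
  - rewrite Rabs_left by lra. assert (ln x <= ln t) by (apply ln_le; lra).
    pose proof (Rle_abs (- ln x)) as H2. rewrite Rabs_Ropp in H2. lra.
Qed.

Lemma invpow_mono p y t : 0 < y <= t -> (/ t) ^ p <= (/ y) ^ p.
Proof.
  intros H. apply pow_incr. split. apply Rlt_le, Rinv_0_lt_compat; lra.
  apply Rinv_le_contravar; lra.
Qed.

Lemma invpow_pos p y : 0 < y -> 0 <= (/ y) ^ p.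
Proof. intros H. apply pow_le. apply Rlt_le, Rinv_0_lt_compat; lra. Qed.

Lemma Psi_bound1 k i p y t L : 0 < y <= t -> Rabs (ln t) <= L ->
  Rabs (Psi k i p t) <= ee L k i * (/ y) ^ p.
Proof.
  intros Hy HL. unfold Psi. rewrite Rabs_mult, ee_abs, Rabs_Ropp.
  rewrite (Rabs_pos_eq ((/ t) ^ p)) by (apply invpow_pos; lra).
  apply Rmult_le_compat. apply ee_nonneg, Rabs_pos. apply invpow_pos; lra.
  apply ee_mono. split. apply Rabs_pos. exact HL.
  apply invpow_mono; lra.
Qed.

Lemma exp_abs_ln t : 0 < t -> exp (Rabs (ln t)) <= t + / t.
Proof.
  intros Ht. pose proof (Rinv_0_lt_compat _ Ht).
  destruct (Rle_lt_dec 0 (ln t)).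
  - rewrite Rabs_pos_eq by lra. rewrite exp_ln by lra. lra.
  - rewrite Rabs_left by lra. rewrite exp_Ropp, exp_ln by lra. lra.
Qed.

Lemma Psi_bound2 k i p Y t : 0 < Y <= t -> (1 <= p)%nat ->
  Rabs (Psi k i p t) <= (/ Y) ^ (p - 1) + (/ Y) ^ (S p).
Proof.
  intros HY Hp. unfold Psi. rewrite Rabs_mult, ee_abs, Rabs_Ropp.
  rewrite (Rabs_pos_eq ((/ t) ^ p)) by (apply invpow_pos; lra).
  apply Rle_trans with ((t + / t) * (/ t) ^ p).
  - apply Rmult_le_compat_r. apply invpow_pos; lra.
    eapply Rle_trans. apply ee_le_exp, Rabs_pos. apply exp_abs_ln; lra.
  - destruct p as [|p]. lia. replace (S p - 1)%nat with p by lia.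
    replace ((t + / t) * (/ t) ^ S p) with ((/ t) ^ p + (/ t) ^ S (S p)).
    apply Rplus_le_compat; apply invpow_mono; lra.
    simpl. field. lra.
Qed.

Lemma abs4 a b c A B C D : 0 <= a -> 0 <= b -> 0 <= c ->
  Rabs (a * A + b * B + c * C + D) <= a * Rabs A + b * Rabs B + c * Rabs C + Rabs D.
Proof.
  intros. eapply Rle_trans. apply Rabs_triang. eapply Rle_trans. apply Rplus_le_compat_r. apply Rabs_triang.
  eapply Rle_trans. apply Rplus_le_compat_r. apply Rplus_le_compat_r. apply Rabs_triang.
  rewrite !Rabs_mult, (Rabs_pos_eq a), (Rabs_pos_eq b), (Rabs_pos_eq c) by assumption. lra.
Qed.

Lemma abs5 a b c d A B C D E : 0 <= a -> 0 <= b -> 0 <= c -> 0 <= d ->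
  Rabs (a * A + b * B + c * C + d * D + E) <= a * Rabs A + b * Rabs B + c * Rabs C + d * Rabs D + Rabs E.
Proof.
  intros. eapply Rle_trans. apply Rabs_triang. apply Rplus_le_compat_r.
  eapply Rle_trans. apply Rabs_triang. rewrite (Rabs_mult d), (Rabs_pos_eq d) by assumption.
  apply Rplus_le_compat_r.
  replace (a * A + b * B + c * C) with (a * A + b * B + c * C + 0) by ring.
  eapply Rle_trans. apply abs4; assumption. rewrite Rabs_R0. lra.
Qed.

Definition M3 L k := 6 * ee L k 0 + 11 * ee L k 1 + 6 * ee L k 2 + ee L k 3.

Lemma phi3_bound1 k y t L : 0 < y <= t -> Rabs (ln t) <= L -> Rabs (phi3 k t) <= M3 L k * (/ y) ^ 4.
Proof.
  intros Hy HL. unfold phi3, M3. rewrite Rabs_Ropp.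
  eapply Rle_trans. apply abs4; lra.
  pose proof (Psi_bound1 k 0 4 y t L Hy HL). pose proof (Psi_bound1 k 1 4 y t L Hy HL).
  pose proof (Psi_bound1 k 2 4 y t L Hy HL). pose proof (Psi_bound1 k 3 4 y t L Hy HL).
  lra.
Qed.

Lemma D3phi0_bound1 k x y : 0 < x <= y ->
  Rabs (D3 (phi0 k) y) <= M3 (ln (y + 3) + Rabs (ln x)) k * (/ y) ^ 4.
Proof.
  intros Hxy. apply (D3_bound _ (phi1 k) (phi2 k) (phi3 k)).
  intros; apply phi0_d; auto. intros; apply phi1_d; auto. intros; apply phi2_d; auto. lra.
  intros t Ht. apply phi3_bound1. lra. apply (ln_bound x y t); lra.
Qed.

Lemma M3_series L : is_series (fun k => 2 ^ k * M3 L k) (60 * exp (2 * L)).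
Proof.
  unfold M3.
  apply (isR_ext (fun k => 6 * (2 ^ k * ee L k 0) + 11 * (2 ^ k * ee L k 1) + 6 * (2 ^ k * ee L k 2) + (2 ^ k * ee L k 3))
    _ (6 * (2 ^ 0 * exp (2 * L)) + 11 * (2 ^ 1 * exp (2 * L)) + 6 * (2 ^ 2 * exp (2 * L)) + (2 ^ 3 * exp (2 * L)))).
  intros; ring. simpl; ring.
  repeat apply isR_plus; try apply isR_scal; apply EES.
Qed.

Lemma phi4_bound2 j Y t : 0 < Y <= t -> Rabs (phi4 j t) <= 120 * ((/ Y) ^ 4 + (/ Y) ^ 6).
Proof.
  intros HY. unfold phi4. eapply Rle_trans. apply abs5; lra.
  pose proof (Psi_bound2 j 0 5 Y t HY ltac:(lia)). pose proof (Psi_bound2 j 1 5 Y t HY ltac:(lia)).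
  pose proof (Psi_bound2 j 2 5 Y t HY ltac:(lia)). pose proof (Psi_bound2 j 3 5 Y t HY ltac:(lia)).
  pose proof (Psi_bound2 j 4 5 Y t HY ltac:(lia)). simpl (5 - 1)%nat in *. lra.
Qed.

Lemma phi3_bound2 j Y t : 0 < Y <= t -> Rabs (phi3 j t) <= 24 * ((/ Y) ^ 3 + (/ Y) ^ 5).
Proof.
  intros HY. unfold phi3. rewrite Rabs_Ropp. eapply Rle_trans. apply abs4; lra.
  pose proof (Psi_bound2 j 0 4 Y t HY ltac:(lia)). pose proof (Psi_bound2 j 1 4 Y t HY ltac:(lia)).
  pose proof (Psi_bound2 j 2 4 Y t HY ltac:(lia)). pose proof (Psi_bound2 j 3 4 Y t HY ltac:(lia)).
  simpl (4 - 1)%nat in *. lra.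
Qed.

Lemma D3phi1_bound2 j Y y : 0 < Y <= y -> Rabs (D3 (phi1 j) y) <= 120 * ((/ Y) ^ 4 + (/ Y) ^ 6).
Proof.
  intros H. apply (D3_bound _ (phi2 j) (phi3 j) (phi4 j)).
  intros; apply phi1_d; auto. intros; apply phi2_d; auto. intros; apply phi3_d; auto. lra.
  intros t Ht. apply phi4_bound2. lra.
Qed.

Lemma D3phi0_bound2 j Y y : 0 < Y <= y -> Rabs (D3 (phi0 j) y) <= 24 * ((/ Y) ^ 3 + (/ Y) ^ 5).
Proof.
  intros H. apply (D3_bound _ (phi1 j) (phi2 j) (phi3 j)).
  intros; apply phi0_d; auto. intros; apply phi1_d; auto. intros; apply phi2_d; auto. lra.
  intros t Ht. apply phi3_bound2. lra.
Qed.


Lemma series_le_of (u v : nat -> R) (l : R) :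
  (forall k, Rabs (u k) <= v k) -> is_series v l ->
  ex_series (fun k => Rabs (u k)) /\ Series (fun k => Rabs (u k)) <= l.
Proof.
  intros H Hv.
  assert (E : ex_series (fun k => Rabs (u k))).
  { apply (ex_series_bound _ v). exists l; exact Hv. intros k. rewrite Rabs_Rabsolu. apply H. }
  split. exact E. rewrite <- (is_series_unique _ _ Hv). apply Series_le.
  intros k. split. apply Rabs_pos. apply H. exists l; exact Hv.
Qed.

Definition yy (x : R) (n : nat) : R := INR n + x.
Definition LL (x : R) (n : nat) : R := ln (yy x n + 3) + Rabs (ln x).
Definition bn (x : R) (n : nat) : R := 60 * exp (2 * LL x n) * (/ yy x n) ^ 4.

Lemma yy_pos x n : 0 < x -> 0 < yy x n.
Proof. intros. unfold yy. pose proof (pos_INR n). lra. Qed.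

Lemma yy_ge x n : 0 < x -> x <= yy x n.
Proof. intros. unfold yy. pose proof (pos_INR n). lra. Qed.

Lemma bn_ex x : 0 < x -> ex_series (bn x).
Proof.
  intros Hx. set (K := exp (2 * Rabs (ln x))).
  apply (ex_series_bound _ (fun n => 60 * K * (2 * (/ (INR n + x)) ^ 2 + 18 * (/ (INR n + x)) ^ 4))).
  - destruct (ex_inv_pow x 2 Hx (le_n _)) as [l2 H2].
    destruct (ex_inv_pow x 4 Hx ltac:(lia)) as [l4 H4].
    eexists. apply isR_scal. apply isR_plus; apply isR_scal; eassumption.
  - intros n. unfold bn, LL. fold (yy x n). pose proof (yy_pos x n Hx) as Hy.
    set (y := yy x n) in *. change (INR n + x) with y.
    replace (exp (2 * (ln (y + 3) + Rabs (ln x)))) with ((y + 3) ^ 2 * K).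
    2: { unfold K. rewrite Rmult_plus_distr_l, exp_plus. f_equal.
         replace (2 * ln (y + 3)) with (ln (y + 3) + ln (y + 3)) by ring.
         rewrite exp_plus, exp_ln by lra. ring. }
    assert (HK : 0 < K) by apply exp_pos.
    rewrite Rabs_pos_eq.
    2: { apply Rmult_le_pos. apply Rmult_le_pos. lra. apply Rmult_le_pos. apply pow_le; lra. lra. apply invpow_pos; lra. }
    assert (E : (y + 3) ^ 2 * (/ y) ^ 4 <= 2 * (/ y) ^ 2 + 18 * (/ y) ^ 4).
    { replace ((y + 3) ^ 2 * (/ y) ^ 4) with (((/ y) ^ 2) + 6 * (/ y) ^ 3 + 9 * (/ y) ^ 4)
        by (field; lra).
      assert (6 * (/ y) ^ 3 <= (/ y) ^ 2 + 9 * (/ y) ^ 4).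
      { set (v := / y). assert (0 <= v) by (unfold v; apply Rlt_le, Rinv_0_lt_compat; lra).
        pose proof (pow2_ge_0 (v * (1 - 3 * v))). simpl in *. nra. }
      lra. }
    replace (60 * ((y + 3) ^ 2 * K) * (/ y) ^ 4) with (60 * K * ((y + 3) ^ 2 * (/ y) ^ 4)) by ring.
    apply Rmult_le_compat_l. lra. exact E.
Qed.

Definition fz (z y : R) : R := exp (- z * ln y).

Lemma EXPF w y : 0 < y -> is_series (fun k => phi0 k y * w ^ k) (fz (1 + w) y).
Proof.
  intros Hy.
  apply (isR_ext (fun k => / y * ((w * - ln y) ^ k / INR (fact k))) _ (/ y * exp (w * - ln y))).
  - intros k. unfold phi0, Psi, ee. simpl Nat.leb. cbv iota. rewrite Nat.sub_0_r.
    rewrite Rpow_mult_distr. simpl pow. unfold Rdiv. ring.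
  - unfold fz. replace (- (1 + w) * ln y) with (- ln y + w * - ln y) by ring.
    rewrite exp_plus, exp_Ropp, exp_ln by lra. reflexivity.
  - apply isR_scal. apply EXPS.
Qed.

Lemma D1_lin (u : nat -> R -> R) (v : R -> R) y :
  (forall t, y <= t -> is_series (fun k => u k t) (v t)) -> is_series (fun k => D1 (u k) y) (D1 v y).
Proof. intros H. unfold D1. apply isR_minus; apply H; lra. Qed.

Lemma D2_lin (u : nat -> R -> R) (v : R -> R) y :
  (forall t, y <= t -> is_series (fun k => u k t) (v t)) -> is_series (fun k => D2 (u k) y) (D2 v y).
Proof.
  intros H. apply (isR_ext (fun k => u k y - 2 * u k (y + 1) + u k (y + 2)) _ (v y - 2 * v (y + 1) + v (y + 2))).
  intros; rewrite D2_exp; ring. rewrite D2_exp; ring.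
  apply isR_plus. apply isR_minus. apply H; lra. apply isR_scal. apply H; lra. apply H; lra.
Qed.

Lemma D3_lin (u : nat -> R -> R) (v : R -> R) y :
  (forall t, y <= t -> is_series (fun k => u k t) (v t)) -> is_series (fun k => D3 (u k) y) (D3 v y).
Proof.
  intros H. apply (isR_ext (fun k => u k y - 3 * u k (y + 1) + 3 * u k (y + 2) - u k (y + 3)) _
     (v y - 3 * v (y + 1) + 3 * v (y + 2) - v (y + 3))).
  intros; rewrite D3_exp; ring. rewrite D3_exp; ring.
  apply isR_minus. apply isR_plus. apply isR_minus. apply H; lra. apply isR_scal. apply H; lra.
  apply isR_scal. apply H; lra. apply H; lra.
Qed.

Lemma D1_scal (h : R -> R) c y : D1 (fun t => h t * c) y = D1 h y * c.
Proof. unfold D1. ring. Qed.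
Lemma D2_scal (h : R -> R) c y : D2 (fun t => h t * c) y = D2 h y * c.
Proof. rewrite !D2_exp. ring. Qed.
Lemma D3_scal (h : R -> R) c y : D3 (fun t => h t * c) y = D3 h y * c.
Proof. rewrite !D3_exp. ring. Qed.

Lemma D3_bn x n k : 0 < x -> 2 ^ k * Rabs (D3 (phi0 k) (yy x n)) <= 2 ^ k * M3 (LL x n) k * (/ yy x n) ^ 4.
Proof.
  intros Hx. rewrite Rmult_assoc. apply Rmult_le_compat_l. apply pow_le; lra.
  apply D3phi0_bound1. split. exact Hx. apply yy_ge; exact Hx.
Qed.

Lemma bn_series x n : is_series (fun k => 2 ^ k * M3 (LL x n) k * (/ yy x n) ^ 4) (bn x n).
Proof.
  unfold bn. apply (isR_ext (fun k => 2 ^ k * M3 (LL x n) k * (/ yy x n) ^ 4) _ (60 * exp (2 * LL x n) * (/ yy x n) ^ 4)).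
  intros; ring. ring. apply is_series_scal_r. apply M3_series.
Qed.

Definition S3 x k := Series (fun n => (-1) ^ n * D3 (phi0 k) (yy x n)).
Definition cc k x := phi0 k x / 2 + D1 (phi0 k) x / 4 + D2 (phi0 k) x / 8 + S3 x k / 8.
Definition T3 w x := Series (fun n => (-1) ^ n * D3 (fz (1 + w)) (yy x n)).
Definition Fv w x := fz (1 + w) x / 2 + D1 (fz (1 + w)) x / 4 + D2 (fz (1 + w)) x / 8 + T3 w x / 8.

Lemma F2 x w : 0 < x -> Rabs w <= 2 ->
  ex_series (fun n => (-1) ^ n * D3 (fz (1 + w)) (yy x n)) /\ is_series (fun k => cc k x * w ^ k) (Fv w x).
Proof.
  intros Hx Hw.
  set (a := fun n k => (-1) ^ n * D3 (phi0 k) (yy x n) * w ^ k).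
  assert (EXw : forall t, 0 < t -> is_series (fun k => phi0 k t * w ^ k) (fz (1 + w) t)).
  { intros t Ht. apply EXPF. exact Ht. }
  assert (Hrow : forall n, is_series (fun k => a n k) ((-1) ^ n * D3 (fz (1 + w)) (yy x n))).
  { intros n. pose proof (D3_lin (fun k t => phi0 k t * w ^ k) (fz (1 + w)) (yy x n)) as H.
    apply (isR_ext (fun k => (-1) ^ n * D3 (fun t => phi0 k t * w ^ k) (yy x n)) _ ((-1) ^ n * D3 (fz (1 + w)) (yy x n))).
    intros k. unfold a. rewrite D3_scal. ring. reflexivity.
    apply isR_scal. apply H. intros t Ht. apply EXw. pose proof (yy_pos x n Hx). lra. }
  assert (Habs : forall n k, Rabs (a n k) <= 2 ^ k * M3 (LL x n) k * (/ yy x n) ^ 4).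
  { intros n k. unfold a. rewrite !Rabs_mult, pow_1_abs, Rmult_1_l, <- RPow_abs.
    eapply Rle_trans; [| apply (D3_bn x n k Hx)].
    rewrite Rmult_comm. apply Rmult_le_compat_r. apply Rabs_pos.
    apply pow_incr. split. apply Rabs_pos. exact Hw. }
  assert (Hl : forall n, ex_series (fun k => Rabs (a n k)) /\ Series (fun k => Rabs (a n k)) <= bn x n).
  { intros n. apply (series_le_of _ _ _ (Habs n)). apply bn_series. }
  destruct (series_interchange a (bn x) (bn_ex x Hx) (fun n => proj1 (Hl n)) (fun n => proj2 (Hl n))) as [E1 E2].
  assert (ER : forall n, Series (fun k => a n k) = (-1) ^ n * D3 (fz (1 + w)) (yy x n)).
  { intros n. apply is_series_unique. apply Hrow. }
  assert (EC : forall k, Series (fun n => a n k) = S3 x k * w ^ k).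
  { intros k. unfold S3, a. apply Series_scal_r. }
  split.
  - apply (ex_series_ext (fun n => Series (fun k => a n k))). exact ER. exact E1.
  - assert (E3 : is_series (fun k => S3 x k * w ^ k) (T3 w x)).
    { unfold T3. apply (isR_ext (fun k => Series (fun n => a n k)) _ (Series (fun n => Series (fun k => a n k)))).
      exact EC. apply Series_ext. exact ER. exact E2. }
    unfold cc, Fv.
    apply (isR_ext (fun k => / 2 * (phi0 k x * w ^ k) + / 4 * D1 (fun t => phi0 k t * w ^ k) x
                     + / 8 * D2 (fun t => phi0 k t * w ^ k) x + / 8 * (S3 x k * w ^ k)) _
       (/ 2 * fz (1 + w) x + / 4 * D1 (fz (1 + w)) x + / 8 * D2 (fz (1 + w)) x + / 8 * T3 w x)).
    + intros k. rewrite D1_scal, D2_scal. unfold Rdiv. ring.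
    + unfold Rdiv. ring.
    + repeat apply isR_plus; apply isR_scal.
      * apply EXw. exact Hx.
      * apply D1_lin. intros t Ht. apply EXw. lra.
      * apply D2_lin. intros t Ht. apply EXw. lra.
      * exact E3.
Qed.


Lemma euler (g : nat -> R) (l : R) : is_lim_seq g 0 ->
  is_series (fun n => (-1) ^ n * (g n - g (S n))) l ->
  is_series (fun n => (-1) ^ n * g n) (g 0%nat / 2 + l / 2).
Proof.
  intros Hg Hs.
  assert (Id : forall N, sum_n (fun n => (-1) ^ n * g n) (S N) =
     g 0%nat / 2 + sum_n (fun n => (-1) ^ n * (g n - g (S n))) N / 2 + (-1) ^ (S N) * g (S N) / 2).
  { induction N as [|N IH].
    - rewrite sum_Sn, !sum_O. unfold plus; simpl. field.
    - rewrite sum_Sn, IH, sum_Sn. unfold plus; simpl. field. }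
  unfold is_series. change (is_lim_seq (sum_n (fun n => (-1) ^ n * g n)) (g 0%nat / 2 + l / 2)).
  apply is_lim_seq_incr_1.
  apply (is_lim_seq_ext (fun N => g 0%nat / 2 + sum_n (fun n => (-1) ^ n * (g n - g (S n))) N / 2 + (-1) ^ (S N) * g (S N) / 2)).
  { intros N. rewrite Id. reflexivity. }
  replace (g 0%nat / 2 + l / 2) with (g 0%nat / 2 + l / 2 + 0) by ring.
  apply is_lim_seq_plus'. apply is_lim_seq_plus'. apply is_lim_seq_const.
  apply (is_lim_seq_scal_r _ (/ 2) l). exact Hs.
  apply is_lim_seq_abs_0.
  apply (is_lim_seq_ext (fun N => Rabs (g (S N)) / 2)).
  { intros N. unfold Rdiv. rewrite !Rabs_mult, pow_1_abs, (Rabs_pos_eq (/ 2)) by lra. ring. }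
  replace 0 with (0 / 2) by field.
  apply (is_lim_seq_scal_r _ (/ 2) 0).
  apply -> is_lim_seq_abs_0. apply -> is_lim_seq_incr_1. exact Hg.
Qed.

Lemma fz_lim z x : 0 < z -> 0 < x -> is_lim_seq (fun n => fz z (yy x n)) 0.
Proof.
  intros Hz Hx. unfold fz, yy.
  assert (H1 : is_lim_seq (fun n => INR n + x) p_infty).
  { apply is_lim_seq_plus with p_infty x. apply is_lim_seq_INR. apply is_lim_seq_const. simpl. reflexivity. }
  assert (H2 : is_lim_seq (fun n => ln (INR n + x)) p_infty).
  { apply (is_lim_comp_seq ln _ p_infty p_infty). apply is_lim_ln_p.
    exists 0%nat. intros; discriminate. exact H1. }
  assert (H3 : is_lim_seq (fun n => - z * ln (INR n + x)) m_infty).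
  { pose proof (is_lim_seq_scal_l _ (- z) _ H2) as H. simpl in H.
    destruct (Rle_dec 0 (- z)). lra. exact H. }
  apply (is_lim_comp_seq exp _ m_infty 0). apply is_lim_exp_m.
  exists 0%nat. intros; discriminate. exact H3.
Qed.

Lemma yyS x n : yy x (S n) = yy x n + 1.
Proof. unfold yy. rewrite S_INR. ring. Qed.

Lemma yy0 x : yy x 0 = x.
Proof. unfold yy. simpl. ring. Qed.

Lemma zeta_F x z : 0 < x -> 0 < z -> z <= 3 -> zetaE z x = Fv (z - 1) x.
Proof.
  intros Hx Hz Hz3.
  assert (Hw : Rabs (z - 1) <= 2) by (unfold Rabs; destruct Rcase_abs; lra).
  destruct (F2 x (z - 1) Hx Hw) as [Ex _].
  replace (1 + (z - 1)) with z in Ex by ring.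
  unfold Fv, T3. replace (1 + (z - 1)) with z by ring.
  set (T := Series (fun n => (-1) ^ n * D3 (fz z) (yy x n))).
  assert (S3s : is_series (fun n => (-1) ^ n * D3 (fz z) (yy x n)) T) by (apply Series_correct; exact Ex).
  set (g0 := fun n => fz z (yy x n)).
  set (g1 := fun n => D1 (fz z) (yy x n)).
  set (g2 := fun n => D2 (fz z) (yy x n)).
  assert (L0 : is_lim_seq g0 0) by (apply fz_lim; assumption).
  assert (E0 : forall n, g0 n - g0 (S n) = g1 n).
  { intros n. unfold g0, g1, D1. rewrite yyS. reflexivity. }
  assert (E1 : forall n, g1 n - g1 (S n) = g2 n).
  { intros n. unfold g1, g2, D2. rewrite yyS. reflexivity. }
  assert (E2 : forall n, g2 n - g2 (S n) = D3 (fz z) (yy x n)).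
  { intros n. unfold g2, D3. rewrite yyS. reflexivity. }
  assert (L1 : is_lim_seq g1 0).
  { apply (is_lim_seq_ext (fun n => g0 n - g0 (S n))). exact E0.
    replace 0 with (0 - 0) by ring. apply is_lim_seq_minus'. exact L0. apply -> is_lim_seq_incr_1. exact L0. }
  assert (L2 : is_lim_seq g2 0).
  { apply (is_lim_seq_ext (fun n => g1 n - g1 (S n))). exact E1.
    replace 0 with (0 - 0) by ring. apply is_lim_seq_minus'. exact L1. apply -> is_lim_seq_incr_1. exact L1. }
  assert (A2 : is_series (fun n => (-1) ^ n * g2 n) (g2 0%nat / 2 + T / 2)).
  { apply euler. exact L2. eapply is_series_ext; [| exact S3s]. intros n. rewrite E2. reflexivity. }
  assert (A1 : is_series (fun n => (-1) ^ n * g1 n) (g1 0%nat / 2 + (g2 0%nat / 2 + T / 2) / 2)).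
  { apply euler. exact L1. eapply is_series_ext; [| exact A2]. intros n. rewrite E1. reflexivity. }
  assert (A0 : is_series (fun n => (-1) ^ n * g0 n) (g0 0%nat / 2 + (g1 0%nat / 2 + (g2 0%nat / 2 + T / 2) / 2) / 2)).
  { apply euler. exact L0. eapply is_series_ext; [| exact A1]. intros n. rewrite E0. reflexivity. }
  unfold zetaE. transitivity (Series (fun n => (-1) ^ n * g0 n)). apply Series_ext; intros n; reflexivity.
  rewrite (is_series_unique _ _ A0).
  unfold g0, g1, g2. rewrite yy0. field.
Qed.

Lemma ex_abs_lin (a b : nat -> R) (al be : R) :
  ex_series (fun k => Rabs (a k)) -> ex_series (fun k => Rabs (b k)) ->
  ex_series (fun k => Rabs (al * a k + be * b k)).
Proof.
  intros [la Ha] [lb Hb].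
  apply (ex_series_bound _ (fun k => Rabs al * Rabs (a k) + Rabs be * Rabs (b k))).
  exists (Rabs al * la + Rabs be * lb). apply isR_plus; apply isR_scal; assumption.
  intros k. rewrite Rabs_Rabsolu. eapply Rle_trans. apply Rabs_triang. rewrite !Rabs_mult. lra.
Qed.

Lemma ex_abs_phi0 y : 0 < y -> ex_series (fun k => Rabs (phi0 k y)).
Proof.
  intros Hy. apply (ex_series_bound _ (fun k => ee (Rabs (ln y)) k 0 * (/ y) ^ 1)).
  - exists (exp (Rabs (ln y)) * (/ y) ^ 1). apply is_series_scal_r.
    apply (isR_ext (fun k => Rabs (ln y) ^ k / INR (fact k)) _ (exp (Rabs (ln y)))). intros k. unfold ee. simpl. rewrite Nat.sub_0_r. reflexivity.
    reflexivity. apply EXPS.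
  - intros k. rewrite Rabs_Rabsolu. apply Psi_bound1. lra. lra.
Qed.

Lemma LL_pos x n : 0 < x -> 0 <= LL x n.
Proof.
  intros Hx. unfold LL. pose proof (Rabs_pos (ln x)). pose proof (yy_pos x n Hx).
  assert (0 <= ln (yy x n + 3)) by (rewrite <- ln_1; apply ln_le; lra). lra.
Qed.

Lemma M3_pos L k : 0 <= L -> 0 <= M3 L k.
Proof.
  intros HL. unfold M3. pose proof (ee_nonneg L k 0 HL). pose proof (ee_nonneg L k 1 HL).
  pose proof (ee_nonneg L k 2 HL). pose proof (ee_nonneg L k 3 HL). lra.
Qed.

Lemma D3_abs_le_bn x n k : 0 < x -> Rabs (D3 (phi0 k) (yy x n)) <= bn x n.
Proof.
  intros Hx. eapply Rle_trans. apply D3phi0_bound1. split. exact Hx. apply yy_ge; exact Hx.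
  pose proof (M3_pos (LL x n) k (LL_pos x n Hx)) as HM.
  pose proof (invpow_pos 4 _ (yy_pos x n Hx)) as HI.
  assert (H2 : 1 <= 2 ^ k) by (apply pow_R1_Rle; lra).
  apply Rle_trans with (2 ^ k * M3 (LL x n) k * (/ yy x n) ^ 4).
  - rewrite Rmult_assoc. rewrite <- (Rmult_1_l (M3 _ _ * _)) at 1.
    apply Rmult_le_compat_r. apply Rmult_le_pos; assumption. exact H2.
  - pose proof (bn_series x n) as B. rewrite <- (is_series_unique _ _ B).
    apply (term_le_series (fun k => 2 ^ k * M3 (LL x n) k * (/ yy x n) ^ 4)).
    intros j. apply Rmult_le_pos. apply Rmult_le_pos. apply pow_le; lra. apply M3_pos, LL_pos, Hx. exact HI.
    exists (bn x n). exact B.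
Qed.

Lemma cc_abs x : 0 < x -> ex_series (fun k => Rabs (cc k x)).
Proof.
  intros Hx.
  set (a := fun n k => Rabs (D3 (phi0 k) (yy x n))).
  assert (Habs : forall n k, Rabs (a n k) <= 2 ^ k * M3 (LL x n) k * (/ yy x n) ^ 4).
  { intros n k. unfold a. rewrite Rabs_Rabsolu. rewrite <- (Rmult_1_l (Rabs _)).
    eapply Rle_trans. apply Rmult_le_compat_r. apply Rabs_pos. apply (pow_R1_Rle 2 k); lra.
    apply D3_bn. exact Hx. }
  assert (Hl : forall n, ex_series (fun k => Rabs (a n k)) /\ Series (fun k => Rabs (a n k)) <= bn x n).
  { intros n. apply (series_le_of _ _ _ (Habs n)). apply bn_series. }
  destruct (series_interchange a (bn x) (bn_ex x Hx) (fun n => proj1 (Hl n)) (fun n => proj2 (Hl n))) as [_ E2].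
  assert (HS3 : ex_series (fun k => Rabs (S3 x k))).
  { apply (ex_series_bound _ (fun k => Series (fun n => a n k))). eexists; exact E2.
    intros k. rewrite Rabs_Rabsolu. unfold S3.
    eapply Rle_trans. apply Series_Rabs.
    - apply (ex_series_bound _ (bn x)). apply bn_ex, Hx. intros n. rewrite Rabs_Rabsolu, Rabs_mult, pow_1_abs, Rmult_1_l.
      apply D3_abs_le_bn, Hx.
    - right. apply Series_ext. intros n. unfold a. rewrite Rabs_mult, pow_1_abs, Rmult_1_l. reflexivity. }
  apply (exR_ext (fun k => Rabs (1 * (1 * ((/2 + /4 + /8) * phi0 k x + (- /4 - 2 * /8) * phi0 k (x + 1))
                                        + /8 * phi0 k (x + 2)) + / 8 * S3 x k))).
  { intros k. unfold cc. rewrite D2_exp. unfold D1. f_equal. replace (x + 1 + 1) with (x + 2) by ring. unfold Rdiv. ring. }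
  apply ex_abs_lin; [| exact HS3].
  apply ex_abs_lin; [| apply ex_abs_phi0; lra].
  apply ex_abs_lin; apply ex_abs_phi0; lra.
Qed.

Lemma cc_radius x : 0 < x -> Rbar_lt 0 (CV_radius (fun k => cc k x)).
Proof.
  intros Hx. apply Rbar_lt_le_trans with 1. simpl; lra.
  apply (proj1 (Lub_Rbar_correct (CV_disk (fun k => cc k x)))).
  unfold CV_disk. apply (exR_ext (fun k => Rabs (cc k x))).
  intros k. rewrite pow1, Rmult_1_r. reflexivity. apply cc_abs, Hx.
Qed.

Lemma stieltjes_cc k x : 0 < x -> stieltjesE k x = (-1) ^ k * (cc k x * INR (fact k)).
Proof.
  intros Hx. unfold stieltjesE. f_equal.
  rewrite (Derive_n_ext_loc _ (fun z => PSeries (fun j => cc j x) (z + -1))).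
  - rewrite Derive_n_comp_trans. replace (1 + -1) with 0 by ring.
    apply Derive_n_coef. apply cc_radius, Hx.
  - exists (mkposreal 1 Rlt_0_1). intros t Ht. apply ball_inv in Ht. simpl in Ht.
    assert (Hw : Rabs (t - 1) <= 2) by lra.
    assert (Ht0 : 0 < t /\ t <= 3) by (unfold Rabs in Ht; destruct Rcase_abs in Ht; lra).
    rewrite zeta_F by (tauto || exact Hx).
    destruct (F2 x (t - 1) Hx Hw) as [_ H]. symmetry. replace (t + -1) with (t - 1) by ring.
    apply is_series_unique. exact H.
Qed.


Lemma EXPS1 u : is_series (fun n => INR n * (u ^ n / INR (fact n))) (u * exp u).
Proof.
  apply is_series_decr_1.
  apply (isR_ext (fun n => u * (u ^ n / INR (fact n))) _ (u * exp u)).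
  - intros n. rewrite fact_simpl, mult_INR, S_INR. simpl pow. field.
    split. apply INR_fact_neq_0. pose proof (pos_INR n). lra.
  - simpl. unfold plus, opp; simpl. ring.
  - apply isR_scal, EXPS.
Qed.

Lemma Cnk n k : (k <= n)%nat -> Binomial.C n k = INR (fact n) / (INR (fact k) * INR (fact (n - k))).
Proof. intros; reflexivity. Qed.

Lemma EXPID j y : 0 < y ->
  is_series (fun n => Binomial.C (n + (j - 1) + 1) j * phi0 (n + (j - 1)) y) (- phi1 j y).
Proof.
  intros Hy.
  destruct j as [|j].
  - simpl (0 - 1)%nat.
    apply (isR_ext (fun n => phi0 n y * 1 ^ n) _ (fz (1 + 1) y)).
    + intros n. rewrite Nat.add_0_r, pow1. unfold Binomial.C. replace (n + 1 - 0)%nat with (n + 1)%nat by lia.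
      simpl (fact 0). simpl INR at 2. field. apply INR_fact_neq_0.
    + unfold fz, phi1, Psi, ee. simpl. replace (- (1 + 1) * ln y) with (- ln y + - ln y) by ring.
      rewrite exp_plus, exp_Ropp, exp_ln by lra. field. lra.
    + apply EXPF. exact Hy.
  - replace (S j - 1)%nat with j by lia. set (u := - ln y).
    assert (Ey : exp u = / y) by (unfold u; rewrite exp_Ropp, exp_ln by lra; reflexivity).
    apply (isR_ext (fun n => (u ^ j / (y * INR (fact (S j)))) * (INR n * (u ^ n / INR (fact n)) + INR (S j) * (u ^ n / INR (fact n))))
             _ ((u ^ j / (y * INR (fact (S j)))) * (u * exp u + INR (S j) * exp u))).
    + intros n. rewrite Cnk by lia. 
      assert (E1 : (n + j + 1 - S j = n)%nat) by lia. rewrite E1.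
      assert (E2 : (n + j + 1 = S (n + j))%nat) by lia. rewrite E2.
      unfold phi0, Psi, ee. replace (Nat.leb 0 (n + j)) with true by reflexivity. rewrite Nat.sub_0_r.
      fold u. rewrite (fact_simpl (n + j)), mult_INR, !S_INR, plus_INR, pow_add.
      field. repeat split; try apply INR_fact_neq_0; lra.
    + rewrite Ey. unfold phi1, Psi, ee. replace (Nat.leb 0 (S j)) with true by reflexivity.
      replace (Nat.leb 1 (S j)) with true by reflexivity. fold u.
      replace (S j - 0)%nat with (S j) by lia. replace (S j - 1)%nat with j by lia.
      rewrite fact_simpl, mult_INR. simpl pow. field.
      repeat split; try apply INR_fact_neq_0; try lra. rewrite S_INR. pose proof (pos_INR j); lra.
    + apply isR_scal. apply isR_plus. apply EXPS1. apply isR_scal. apply EXPS.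
Qed.

Lemma term_le_sum_f (f : nat -> R) i N : (forall k, 0 <= f k) -> (i <= N)%nat -> f i <= sum_f_R0 f N.
Proof.
  intros Hf HiN. induction N as [|N IH].
  - assert (i = 0%nat) by lia. subst. simpl. lra.
  - simpl. destruct (Nat.eq_dec i (S N)) as [->|Hne]. pose proof (cond_pos_sum f N). 
    assert (0 <= sum_f_R0 f N) by (apply cond_pos_sum; intros; apply Hf). lra.
    assert (f i <= sum_f_R0 f N) by (apply IH; lia). specialize (Hf (S N)). lra.
Qed.

Lemma C_nonneg n k : 0 <= Binomial.C n k.
Proof.
  unfold Binomial.C. apply Rmult_le_pos. apply pos_INR. apply Rlt_le, Rinv_0_lt_compat.
  apply Rmult_lt_0_compat; apply INR_fact_lt_0.
Qed.

Lemma C_le n k : (k <= n)%nat -> Binomial.C n k <= 2 ^ n.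
Proof.
  intros Hk. replace 2 with (1 + 1) by ring. rewrite binomial.
  eapply Rle_trans; [| apply (term_le_sum_f (fun i => Binomial.C n i * 1 ^ i * 1 ^ (n - i)) k n)].
  rewrite !pow1, !Rmult_1_r. lra.
  intros i. rewrite !pow1. rewrite !Rmult_1_r. apply C_nonneg. exact Hk.
Qed.

Lemma shift_le (v : nat -> R) (l : R) s : (forall k, 0 <= v k) -> is_series v l ->
  ex_series (fun n => v (n + s)%nat) /\ Series (fun n => v (n + s)%nat) <= l.
Proof.
  intros Hv Hl.
  assert (Ex : ex_series v) by (exists l; exact Hl).
  assert (Es : ex_series (fun n => v (s + n)%nat)) by (apply ex_series_incr_n; exact Ex).
  assert (Es' : ex_series (fun n => v (n + s)%nat)).
  { apply (exR_ext (fun n => v (s + n)%nat)). intros n. rewrite Nat.add_comm. reflexivity. exact Es. }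
  split. exact Es'.
  rewrite <- (is_series_unique _ _ Hl).
  destruct s as [|s].
  - right. apply Series_ext. intros n. rewrite Nat.add_0_r. reflexivity.
  - rewrite (Series_incr_n v (S s) (Nat.lt_0_succ _) Ex). simpl pred.
    assert (0 <= sum_f_R0 v s) by (apply cond_pos_sum; exact Hv).
    rewrite (Series_ext _ (fun n => v (S s + n)%nat)). lra. intros n. rewrite Nat.add_comm. reflexivity.
Qed.

Definition cd j x := phi1 j x / 2 + D1 (phi1 j) x / 4 + D2 (phi1 j) x / 8
                     + Series (fun n => (-1) ^ n * D3 (phi1 j) (yy x n)) / 8.

Lemma F3b j x : 0 < x ->
  is_series (fun n => Binomial.C (n + (j - 1) + 1) j * cc (n + (j - 1)) x) (- cd j x).
Proof.
  intros Hx.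
  set (s := (j - 1)%nat).
  set (Cn := fun n => Binomial.C (n + s + 1) j).
  assert (EXu : forall t, 0 < t -> is_series (fun n => phi0 (n + s) t * Cn n) (- phi1 j t)).
  { intros t Ht. apply (isR_ext (fun n => Binomial.C (n + (j - 1) + 1) j * phi0 (n + (j - 1)) t) _ (- phi1 j t)).
    intros n. unfold Cn, s. ring. reflexivity. apply EXPID. exact Ht. }
  set (a := fun m n => (-1) ^ m * D3 (phi0 (n + s)) (yy x m) * Cn n).
  assert (Hrow : forall m, is_series (fun n => a m n) (- ((-1) ^ m * D3 (phi1 j) (yy x m)))).
  { intros m. pose proof (D3_lin (fun n t => phi0 (n + s) t * Cn n) (fun t => - phi1 j t) (yy x m)) as H.
    apply (isR_ext (fun n => (-1) ^ m * D3 (fun t => phi0 (n + s) t * Cn n) (yy x m)) _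
             ((-1) ^ m * D3 (fun t => - phi1 j t) (yy x m))).
    intros n. unfold a. rewrite D3_scal. ring. rewrite !D3_exp. ring.
    apply isR_scal. apply H. intros t Ht. apply EXu. pose proof (yy_pos x m Hx). lra. }
  set (v := fun m k => 2 ^ k * M3 (LL x m) k * (/ yy x m) ^ 4).
  assert (Hv : forall m k, 0 <= v m k).
  { intros m k. unfold v. apply Rmult_le_pos. apply Rmult_le_pos. apply pow_le; lra.
    apply M3_pos, LL_pos, Hx. apply invpow_pos, yy_pos, Hx. }
  assert (Habs : forall m n, Rabs (a m n) <= 2 * v m (n + s)%nat).
  { intros m n. unfold a, v. rewrite !Rabs_mult, pow_1_abs, Rmult_1_l.
    rewrite (Rabs_pos_eq (Cn n)) by apply C_nonneg.
    assert (HC : Cn n <= 2 * 2 ^ (n + s)).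
    { unfold Cn. replace (2 * 2 ^ (n + s)) with (2 ^ (n + s + 1)) by (rewrite pow_add; simpl; ring).
      apply C_le. unfold s. lia. }
    pose proof (D3phi0_bound1 (n + s) x (yy x m) (conj Hx (yy_ge x m Hx))) as HD.
    pose proof (M3_pos (LL x m) (n + s) (LL_pos x m Hx)).
    pose proof (invpow_pos 4 _ (yy_pos x m Hx)).
    apply Rle_trans with ((M3 (LL x m) (n + s) * (/ yy x m) ^ 4) * (2 * 2 ^ (n + s))).
    apply Rmult_le_compat. apply Rabs_pos. apply C_nonneg. exact HD. exact HC.
    right. ring. }
  assert (Hl : forall m, ex_series (fun n => Rabs (a m n)) /\ Series (fun n => Rabs (a m n)) <= 2 * bn x m).
  { intros m. destruct (shift_le (v m) (bn x m) s (Hv m) (bn_series x m)) as [E1 E2].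
    assert (E3 : ex_series (fun n => 2 * v m (n + s)%nat)).
    { destruct E1 as [l Hl0]. exists (2 * l). apply isR_scal. exact Hl0. }
    assert (E4 : ex_series (fun n => Rabs (a m n))).
    { apply (ex_series_bound _ _ E3). intros n. rewrite Rabs_Rabsolu. apply Habs. }
    split. exact E4.
    eapply Rle_trans. apply Series_le. intros n. split. apply Rabs_pos. apply Habs. exact E3.
    rewrite Series_scal_l. lra. }
  assert (Hb2 : ex_series (fun m => 2 * bn x m)).
  { destruct (bn_ex x Hx) as [l Hl0]. exists (2 * l). apply isR_scal. exact Hl0. }
  destruct (series_interchange a (fun m => 2 * bn x m) Hb2 (fun m => proj1 (Hl m)) (fun m => proj2 (Hl m))) as [_ E2].
  assert (ER : forall m, Series (fun n => a m n) = - ((-1) ^ m * D3 (phi1 j) (yy x m))).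
  { intros m. apply is_series_unique. apply Hrow. }
  assert (EC : forall n, Series (fun m => a m n) = S3 x (n + s) * Cn n).
  { intros n. unfold S3, a. apply Series_scal_r. }
  assert (E3 : is_series (fun n => S3 x (n + s) * Cn n) (- Series (fun m => (-1) ^ m * D3 (phi1 j) (yy x m)))).
  { apply (isR_ext (fun n => Series (fun m => a m n)) _ (Series (fun m => Series (fun n => a m n)))).
    exact EC. rewrite <- Series_opp. apply Series_ext. exact ER. exact E2. }
  unfold cd, cc.
  apply (isR_ext (fun n => / 2 * (phi0 (n + s) x * Cn n) + / 4 * D1 (fun t => phi0 (n + s) t * Cn n) x
                   + / 8 * D2 (fun t => phi0 (n + s) t * Cn n) x + / 8 * (S3 x (n + s) * Cn n)) _
     (/ 2 * (- phi1 j x) + / 4 * D1 (fun t => - phi1 j t) x + / 8 * D2 (fun t => - phi1 j t) x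
       + / 8 * (- Series (fun m => (-1) ^ m * D3 (phi1 j) (yy x m))))).
  - intros n. rewrite D1_scal, D2_scal. unfold Cn, s. unfold Rdiv. ring.
  - rewrite !D2_exp. unfold D1. unfold Rdiv. ring.
  - repeat apply isR_plus; apply isR_scal.
    + apply EXu. exact Hx.
    + apply D1_lin. intros t Ht. apply EXu. lra.
    + apply D2_lin. intros t Ht. apply EXu. lra.
    + exact E3.
Qed.

Lemma is_derive_ext_R (f g : R -> R) (x l : R) :
  (forall t, @eq R (f t) (g t)) -> is_derive f x l -> is_derive g x l.
Proof. intros H. apply is_derive_ext. exact H. Qed.

Lemma shift_derive (h h' : R -> R) (c t : R) : is_derive h (c + t) (h' (c + t)) ->
  is_derive (fun s => h (c + s)) t (h' (c + t)).
Proof.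
  intros H. eapply is_derive_eq. apply (is_derive_comp h (fun s => c + s) t (h' (c + t)) 1). exact H.
  eapply is_derive_eq. apply dplus. apply (is_derive_const (K := R_AbsRing)). apply (is_derive_id (K := R_AbsRing)).
  unfold one, zero; simpl. ring.
  unfold scal; simpl. unfold mult; simpl. ring.
Qed.

Lemma S3_derive j x : 0 < x ->
  is_derive (fun t => S3 t j) x (Series (fun n => (-1) ^ n * D3 (phi1 j) (yy x n))).
Proof.
  intros Hx. unfold S3.
  assert (Hx2 : 0 < x / 2) by lra.
  apply (is_derive_series (fun n t => (-1) ^ n * D3 (phi0 j) (yy t n)) (fun n t => (-1) ^ n * D3 (phi1 j) (yy t n))
          (fun n => 120 * ((/ (INR n + x / 2)) ^ 4 + (/ (INR n + x / 2)) ^ 6)) x (x / 2) Hx2).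
  - destruct (ex_inv_pow (x / 2) 4 Hx2 ltac:(lia)) as [l4 H4].
    destruct (ex_inv_pow (x / 2) 6 Hx2 ltac:(lia)) as [l6 H6].
    exists (120 * (l4 + l6)). apply isR_scal. apply isR_plus; assumption.
  - intros n t Ht. assert (Htp : 0 < t) by (unfold Rabs in Ht; destruct Rcase_abs in Ht; lra).
    apply dscal. unfold yy. apply (shift_derive (D3 (phi0 j)) (D3 (phi1 j)) (INR n) t).
    apply D3_d. intros; apply phi0_d; assumption. pose proof (pos_INR n). lra.
  - intros n t Ht. assert (Htp : x / 2 < t) by (unfold Rabs in Ht; destruct Rcase_abs in Ht; lra).
    rewrite Rabs_mult, pow_1_abs, Rmult_1_l. apply D3phi1_bound2. unfold yy. pose proof (pos_INR n). lra.
  - intros t Ht. assert (Htp : x / 2 < t) by (unfold Rabs in Ht; destruct Rcase_abs in Ht; lra).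
    apply (ex_series_bound _ (fun n => 24 * ((/ (INR n + x / 2)) ^ 3 + (/ (INR n + x / 2)) ^ 5))).
    + destruct (ex_inv_pow (x / 2) 3 Hx2 ltac:(lia)) as [l4 H4].
      destruct (ex_inv_pow (x / 2) 5 Hx2 ltac:(lia)) as [l6 H6].
      exists (24 * (l4 + l6)). apply isR_scal. apply isR_plus; assumption.
    + intros n. rewrite Rabs_mult, pow_1_abs, Rmult_1_l. apply D3phi0_bound2. unfold yy. pose proof (pos_INR n). lra.
Qed.

Lemma F3a j x : 0 < x -> is_derive (fun t => cc j t) x (cd j x).
Proof.
  intros Hx.
  apply (is_derive_ext_R (fun t => / 2 * phi0 j t + / 4 * D1 (phi0 j) t + / 8 * D2 (phi0 j) t + / 8 * S3 t j)).
  { intros t. unfold cc. unfold Rdiv. ring. }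
  eapply is_derive_eq.
  apply dplus; [apply dplus; [apply dplus|]|]; apply dscal.
  - apply phi0_d. exact Hx.
  - apply D1_d. intros; apply phi0_d; assumption. exact Hx.
  - apply D2_d. intros; apply phi0_d; assumption. exact Hx.
  - apply S3_derive. exact Hx.
  - unfold cd. change (fun t : R => phi1 j t) with (phi1 j). unfold Rdiv. ring.
Qed.


Lemma m1_sq k : (-1) ^ k * (-1) ^ k = 1.
Proof. rewrite <- Rpow_mult_distr. replace (-1 * -1) with 1 by ring. apply pow1. Qed.

Lemma loc_pos q : 0 < q -> locally q (fun t => 0 < t).
Proof.
  intros hq. exists (mkposreal q hq). intros t Ht. apply ball_inv in Ht. simpl in Ht.
  unfold Rabs in Ht; destruct Rcase_abs in Ht; lra.
Qed.

Lemma zeta1_cc t : 0 < t -> zetaE 1 t = cc 0 t.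
Proof.
  intros Ht. pose proof (stieltjes_cc 0 t Ht) as H. unfold stieltjesE in H. simpl in H. lra.
Qed.

Theorem proposition3p23 (q : R) (hq : 0 < q) :
  (forall j : nat, (1 <= j)%nat ->
     exists d : R,
       is_derive (fun x => stieltjesE j x) q d /\
       is_series
         (fun m : nat =>
            (-1) ^ (m + (j - 1)) / INR (fact (m + (j - 1)))
            * Binomial.C (m + (j - 1) + 1) j * stieltjesE (m + (j - 1)) q)
         (- ((-1) ^ j / INR (fact j) * d)))
  /\
  (exists d l : R,
     is_derive psiE q d /\
     is_series (fun k : nat => (-1) ^ k / INR (fact k) * stieltjesE k q) l /\
     - d = - l).
Proof.
  split.
  - intros j Hj. exists ((-1) ^ j * INR (fact j) * cd j q). split.
    + apply (is_derive_ext_loc (fun t => ((-1) ^ j * INR (fact j)) * cc j t)).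
      * generalize (loc_pos q hq). apply filter_imp. intros t Ht. rewrite stieltjes_cc by exact Ht.
        change (((-1) ^ j * INR (fact j)) * cc j t = (-1) ^ j * (cc j t * INR (fact j))). ring.
      * apply dscal. apply F3a. exact hq.
    + apply (isR_ext (fun n => Binomial.C (n + (j - 1) + 1) j * cc (n + (j - 1)) q) _ (- cd j q)).
      * intros n. rewrite stieltjes_cc by exact hq.
        pose proof (m1_sq (n + (j - 1))). pose proof (INR_fact_neq_0 (n + (j - 1))).
        set (s := (-1) ^ (n + (j - 1))) in *. set (f := INR (fact (n + (j - 1)))) in *.
        set (Cc := Binomial.C (n + (j - 1) + 1) j). set (cv := cc (n + (j - 1)) q).
        replace (s / f * Cc * (s * (cv * f))) with ((s * s) * (Cc * cv) * (f * / f)) by (unfold Rdiv; ring).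
        rewrite H, Rinv_r by exact H0. ring.
      * pose proof (m1_sq j). pose proof (INR_fact_neq_0 j).
        replace ((-1) ^ j / INR (fact j) * ((-1) ^ j * INR (fact j) * cd j q))
          with (((-1) ^ j * (-1) ^ j) * cd j q * (INR (fact j) * / INR (fact j))) by (unfold Rdiv; ring).
        rewrite H, Rinv_r by exact H0. ring.
      * apply F3b. exact hq.
  - exists (- cd 0 q), (- cd 0 q). split; [| split; [| reflexivity]].
    + apply (is_derive_ext_loc (fun t => - cc 0 t)).
      * generalize (loc_pos q hq). apply filter_imp. intros t Ht. unfold psiE. rewrite zeta1_cc by exact Ht. reflexivity.
      * apply dopp. apply F3a. exact hq.
    + apply (isR_ext (fun n => Binomial.C (n + (0 - 1) + 1) 0 * cc (n + (0 - 1)) q) _ (- cd 0 q)).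
      * intros n. rewrite stieltjes_cc by exact hq. simpl (0 - 1)%nat. rewrite Nat.add_0_r.
        unfold Binomial.C. replace (n + 1 - 0)%nat with (n + 1)%nat by lia.
        pose proof (m1_sq n). pose proof (INR_fact_neq_0 n). pose proof (INR_fact_neq_0 (n + 1)).
        simpl (fact 0). simpl (INR 1).
        set (s := (-1) ^ n) in *. set (f := INR (fact n)) in *.
        replace (s / f * (s * (cc n q * f))) with ((s * s) * cc n q * (f * / f)) by (unfold Rdiv; ring).
        rewrite H, Rinv_r by exact H0. field. exact H1.
      * reflexivity.
      * apply F3b. exact hq.
Qed.
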